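(* Let $G$ be a finite abelian group and $x,y\in G$ with $[x]_{\mathtt{N}}\neq\mathcal{S}$. Then $x\mathtt{N}y$ if and only if $\langle x\rangle=\langle y\rangle$.
   Context: The power graph $\mathcal{P}(G)$ has vertex set $G$, and distinct $x,y$ are adjacent iff one is a positive integer power of the other. $x\mathtt{N}y$ iff $x$ and $y$ have the same closed neighbourhood in $\mathcal{P}(G)$; $[x]_{\mathtt{N}}$ is the class of $x$. $\mathcal{S}=[1]_{\mathtt{N}}$ is the set of vertices adjacent to all others. *)

(* Defs.v *)
From mathcomp Require Import all_boot all_fingroup.
Set Implicit Arguments. Unset Strict Implicit. Unset Printing Implicit Defensive.
Local Open Scope group_scope.

(* The power graph P(G) of a group G (vertex set G):
   distinct x, y are adjacent iff one is a positive integer power of the other. *)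
Definition is_pos_power (gT : finGroupType) (x y : gT) : Prop :=
  exists k : nat, (0 < k)%N /\ y = x ^+ k.

Definition pg_adj (gT : finGroupType) (x y : gT) : Prop :=
  x <> y /\ (is_pos_power x y \/ is_pos_power y x).

Definition pg_cnbhd (gT : finGroupType) (G : {group gT}) (x z : gT) : Prop :=
  z \in G /\ (z = x \/ pg_adj x z).

Definition relN (gT : finGroupType) (G : {group gT}) (x y : gT) : Prop :=
  forall z, pg_cnbhd G x z <-> pg_cnbhd G y z.

Definition pg_classN (gT : finGroupType) (G : {group gT}) (x : gT) : gT -> Prop :=
  fun y => y \in G /\ relN G x y.

Definition pg_classS (gT : finGroupType) (G : {group gT}) : gT -> Prop :=
  pg_classN G 1.

(* Main.v *)
Require Import Defs.
From mathcomp Require Import all_boot all_fingroup all_solvable.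
Set Warnings "-notation-overridden".
Set Implicit Arguments. Unset Strict Implicit.
Local Open Scope group_scope.

Section Core.
Variable gT : finGroupType.
Implicit Types x y z c w : gT.

Definition Mb x (a : gT) := (a \in <[x]>) || (x \in <[a]>).

Lemma ab_comm (G : {group gT}) (a b : gT) : abelian G -> a \in G -> b \in G -> commute a b.
Proof. move=> /centsP hG ha hb; exact: (hG a ha b hb). Qed.

Lemma coprime_cyc (a : gT) k : coprime #[a] k -> a \in <[a ^+ k]>.
Proof. by rewrite -generator_coprime => /eqP <-; exact: cycle_id. Qed.

Lemma coreL (G : {group gT}) x y :
  abelian G -> x \in G -> y \in G -> y \in <[x]> -> <[y]> != <[x]> ->
  (forall a, a \in G -> Mb x a = Mb y a) -> forall z0, z0 \in G -> Mb x z0.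
Proof.
move=> abG xG yG yx nyx HM z0 z0G; apply/contraT => nz0.
have P0 : (z0 \in G) && ~~ Mb x z0 by rewrite z0G.
case: (@arg_minnP _ z0 (fun z => (z \in G) && ~~ Mb x z) (fun z => #[z]) P0) => z /andP [zG nz] Hmin.
have comm a b : a \in G -> b \in G -> commute a b by move=> ? ?; exact: ab_comm abG _ _.
have z1 : z != 1.
  by apply: contra nz => /eqP ->; rewrite /Mb group1.
set q := pdiv #[z].
have qp : prime q by apply: pdiv_prime; rewrite order_gt1.
have qz : q %| #[z] by apply: pdiv_dvd.
have Mzq : Mb x (z ^+ q).
  apply/negPn/negP => Hn.
  have := Hmin _ (introT andP (conj (groupX q zG) Hn)).
  rewrite orderXdiv // leqNgt ltn_Pdiv ?prime_gt1 ?order_gt0 //.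
have Myz : ~~ Mb y z by rewrite -HM.
have zq_y : z ^+ q \in <[y]>.
  rewrite HM ?groupX // in Mzq; case/orP: Mzq => // yzq.
  by move: Myz; rewrite /Mb (subsetP (cycleX z q) y yzq) orbT.
have K : y \in <[x ^+ q]>.
  case: (boolP (q %| #[x])) => qx.
    apply/contraT => ny.
    have := HM (x ^+ q) (groupX q xG).
    rewrite /Mb mem_cycle /= (negbTE ny) orbF => /esym xq_y.
    have s1 : <[x ^+ q]> \subset <[y]> by rewrite cycle_subG.
    have s2 : <[y]> \subset <[x]> by rewrite cycle_subG.
    have d1 := cardSg s1; have d2 := cardSg s2.
    move: d1; rewrite -/(#[x ^+ q]) -/(#[y]) => d1. move: d2; rewrite -/(#[x]) -/(#[y]) => d2.
    rewrite orderXdiv // in d1.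
    have m0 : 0 < #[x] %/ q by rewrite divn_gt0 ?prime_gt0 // dvdn_leq.
    case/dvdnP: d1 => k hk.
    move: d2; rewrite -(divnK qx) hk [X in X %| _]mulnC dvdn_pmul2l //.
    case/primeP: qp => _ /[apply] /orP [] /eqP kE; move: hk; rewrite kE.
      rewrite mul1n => hy.
      have : <[x ^+ q]> == <[y]>.
        by rewrite eqEcard s1 /= -/(#[y]) -/(#[x ^+ q]) orderXdiv // hy.
      by move/eqP => e; move: ny; rewrite e cycle_id.
    rewrite mulnC divnK // => hy.
    have : <[y]> == <[x]> by rewrite eqEcard s2 /= -/(#[y]) -/(#[x]) hy.
    by rewrite (negbTE nyx).
  have cq : coprime #[x] q by rewrite coprime_sym prime_coprime.
  by apply: (subsetP _ y yx); rewrite cycle_subG coprime_cyc.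
have : z ^+ q \in <[x ^+ q]> by apply: (subsetP _ _ zq_y); rewrite cycle_subG.
case/cycleP => t Ht.
set c := z * (x ^+ t)^-1.
have xtG : x ^+ t \in G by rewrite groupX.
have cG : c \in G by rewrite groupM ?groupV.
have cq : c ^+ q = 1.
  rewrite /c expgMn; last by apply: comm; rewrite ?groupV.
  by rewrite Ht expVgn -!expgM mulnC mulgV.
have cx : c \notin <[x]>.
  apply: contra nz => cx; have -> : z = c * x ^+ t by rewrite /c mulgKV.
  by rewrite /Mb groupM ?mem_cycle.
clearbody c.
have ordc : #[c] = q.
  have : #[c] %| q by rewrite order_dvdn cq.
  case/primeP: qp => _ /[apply] /orP [] /eqP // o1.
  by move: cx; move/eqP: o1; rewrite order_eq1 => /eqP ->; rewrite group1.
have Pc e : c ^+ e \in <[x]> -> c ^+ e = 1.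
  move=> cex; case: (boolP (q %| e)) => qe.
    by apply/eqP; rewrite -order_dvdn ordc.
  have : coprime #[c] e by rewrite ordc prime_coprime.
  move/coprime_cyc => cce.
  by move: cx; rewrite (subsetP _ _ cce) //= cycle_subG.
case: (boolP (q %| #[x])) => qx.
  set w := c * x.
  have wG : w \in G by rewrite groupM.
  have wq : w ^+ q = x ^+ q by rewrite /w expgMn ?cq ?mul1g //; apply: comm.
  have yw : y \in <[w]> by apply: (subsetP (cycleX w q)); rewrite wq.
  have := HM w wG; rewrite {2}/Mb yw orbT /Mb; case/orP.
    move=> wx; move: cx; have -> : c = w * x^-1 by rewrite /w mulgK.
    by rewrite groupM ?groupV ?cycle_id.
  case/cycleP => e he.
  have he' : c ^+ e = x * (x ^+ e)^-1.
    by rewrite {1}he /w expgMn ?mulgK //; apply: comm.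
  have ce1 : c ^+ e = 1 by apply: Pc; rewrite he' groupM ?groupV ?mem_cycle ?cycle_id.
  have qe : q %| e by rewrite -ordc order_dvdn ce1.
  move: he; rewrite /w expgMn ?ce1 ?mul1g; last by apply: comm.
  rewrite -(divnK qe) mulnC expgM => xe.
  have : <[x]> \subset <[x ^+ q]> by rewrite cycle_subG; apply/cycleP; exists (e %/ q).
  move/subset_leq_card; rewrite -/(#[x]) -/(#[x ^+ q]) orderXdiv //.
  by rewrite leqNgt ltn_Pdiv ?prime_gt1 ?order_gt0.
set w := c * y.
have wG : w \in G by rewrite groupM.
have wq : w ^+ q = y ^+ q by rewrite /w expgMn ?cq ?mul1g //; apply: comm.
have cyq : coprime #[y] q.
  apply: (coprime_dvdl (cardSg (_ : <[y]> \subset <[x]>))); first by rewrite cycle_subG.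
  by rewrite coprime_sym prime_coprime.
have yw : y \in <[w]>.
  by apply: (subsetP (cycleX w q)); rewrite wq; exact: coprime_cyc.
have := HM w wG; rewrite {2}/Mb yw orbT /Mb; case/orP.
  move=> wx; move: cx; have -> : c = w * y^-1 by rewrite /w mulgK.
  by rewrite groupM ?groupV.
case/cycleP => e he.
have he' : c ^+ e = x * (y ^+ e)^-1.
  by rewrite {1}he /w expgMn ?mulgK //; apply: comm.
have yex : y ^+ e \in <[x]> by rewrite groupX.
have ce1 : c ^+ e = 1 by apply: Pc; rewrite he' groupM ?groupV ?cycle_id.
move: he; rewrite /w expgMn ?ce1 ?mul1g; last by apply: comm.
move=> xe; move: nyx; rewrite eqEsubset !cycle_subG yx /= xe mem_cycle //.
Qed.

Lemma pos_powerE x z : is_pos_power x z <-> z \in <[x]>.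
Proof.
split; first by case=> k [_ ->]; exact: mem_cycle.
case/cycleP => i ->; case: i => [|i]; last by exists i.+1.
by exists #[x]; rewrite order_gt0 expg_order expg0.
Qed.

Lemma cnbhdE (G : {group gT}) x z : pg_cnbhd G x z <-> (z \in G) && Mb x z.
Proof.
rewrite /pg_cnbhd /pg_adj /Mb; split.
  case=> -> [-> | [_ [/pos_powerE -> | /pos_powerE ->]]] //=; first by rewrite cycle_id.
  by rewrite orbT.
case/andP=> -> h; split=> //.
case: (eqVneq z x) => [->|nzx]; first by left.
right; split; first by move=> e; rewrite e eqxx in nzx.
by case/orP: h => /pos_powerE; [left|right].
Qed.

Lemma relNE (G : {group gT}) x y :
  relN G x y <-> forall z, z \in G -> Mb x z = Mb y z.
Proof.
rewrite /relN; split.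
  move=> h z zG; apply/idP/idP => H.
    by have /cnbhdE/andP[] := (proj1 (h z) (proj2 (cnbhdE G x z) (introT andP (conj zG H)))).
  by have /cnbhdE/andP[] := (proj2 (h z) (proj2 (cnbhdE G y z) (introT andP (conj zG H)))).
move=> h z; split; move/cnbhdE/andP=> [zG H]; apply/cnbhdE; rewrite zG /=.
  by rewrite -h.
by rewrite h.
Qed.

End Core.

Unset Implicit Arguments. Set Strict Implicit.

Theorem mainTheorem16 (gT : finGroupType) (G : {group gT}) (x y : gT) :
  abelian G -> x \in G -> y \in G ->
  ~ (forall z, pg_classN G x z <-> pg_classS G z) ->
  (relN G x y <-> <[x]> = <[y]>).
Proof.
move=> abG xG yG hS.
have hS' : ~ (forall z, z \in G -> Mb x z).
  move=> hall; apply: hS => z; rewrite /pg_classS /pg_classN.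
  split; case=> zG /relNE h; split=> //; apply/relNE => w wG.
    by rewrite -h // hall // /Mb group1 orbT.
  by rewrite hall // -h // /Mb group1 orbT.
split; last first.
  move=> e; apply/relNE => z _; rewrite /Mb -[x \in _]cycle_subG e cycle_subG; done.
move/relNE => H.
have : Mb x y by rewrite H // /Mb cycle_id.
case/orP => [yx | xy].
  apply/eqP; apply/contraT; rewrite eq_sym => nb; exfalso; apply: hS'.
  exact: (coreL abG xG yG yx nb H).
apply/eqP; apply/contraT => nb; exfalso; apply: hS'.
move=> z zG; rewrite H //.
exact: (coreL abG yG xG xy nb (fun a aG => esym (H a aG))).
Qed.
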